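(* Let $n\ge 1$, let $f,g:\mathbb{R}^n\to\mathbb{R}$ be continuously differentiable with $f(\mathbf 0)=0$ and $g(\mathbf x)\neq 0$ for all $\mathbf x\in\mathbb{R}^n$, and consider the control system $\dot{\mathbf x}=\mathbf f(\mathbf x)+\mathbf g(\mathbf x)u$ with $\mathbf f(\mathbf x)=A_0\mathbf x+e_n f(\mathbf x)$, $\mathbf g(\mathbf x)=e_n g(\mathbf x)$ (notation in context). Let $N\in\mathbb{N}$, $T>0$, $\underline t\ge 0$, $\overline t=\underline t+NT$, $t_k=\underline t+kT$, and let $\mathbf x_0,\dots,\mathbf x_N\in\mathbb{R}^n$. For $k=0,\dots,N-1$ let $r_k:[0,T]\to\mathbb{R}$ be the unique Bézier curve of order $2n-1$ with $r_k^{(j-1)}(0)=x_k^j$ and $r_k^{(j-1)}(T)=x_{k+1}^j$ for $j=1,\dots,n$ (where $\mathbf x_k=(x_k^1,\dots,x_k^n)^\top$), and let $\mathbf r_k(\tau)=(r_k(\tau),r_k^{(1)}(\tau),\dots,r_k^{(n-1)}(\tau))^\top$. Then the function $\mathbf x_d:[\underline t,\overline t]\to\mathbb{R}^n$ defined by $\mathbf x_d(t)=\mathbf r_k(t-t_k)$ for $t\in[t_k,t_{k+1})$, $k=0,\dots,N-1$, and $\mathbf x_d(\overline t)=\mathbf x_N$, is a dynamically admissible trajectory for this system.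
   Context: $A_0\in\mathbb{R}^{n\times n}$ is the matrix $\begin{bmatrix}\mathbf 0&I\\0&\mathbf 0^\top\end{bmatrix}$ (ones on the superdiagonal, zeros elsewhere), and $e_n$ is the last standard basis vector of $\mathbb{R}^n$. A Bézier curve of order $p$ on $[0,T]$ is $r(\tau)=\boldsymbol\xi^\top\mathbf z(\tau)=\sum_{i=0}^p\xi_i z_i(\tau)$ with control points $\xi_i\in\mathbb{R}$ and Bernstein polynomials $z_i(\tau)=\binom{p}{i}(\tau/T)^i(1-\tau/T)^{p-i}$. (For order $2n-1$, the $2n$ boundary conditions above determine the control points uniquely.) A piecewise continuously differentiable function $\mathbf x_d:[\underline t,\overline t]\to\mathbb{R}^n$ (continuous, with derivative on the open intervals of a finite partition having one-sided limits) is a dynamically admissible trajectory if there is a piecewise continuous $u_d:[\underline t,\overline t]\to\mathbb{R}$ with $\dot{\mathbf x}_d(t)=\mathbf f(\mathbf x_d(t))+\mathbf g(\mathbf x_d(t))u_d(t)$ for almost all $t\in[\underline t,\overline t]$. *)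

(* Defs.v *)
From HB Require Import structures.
From mathcomp Require Import all_boot all_order all_algebra.
From mathcomp Require Import all_classical all_reals all_analysis.
Set Implicit Arguments. Unset Strict Implicit. Unset Printing Implicit Defensive.
Import Order.TTheory GRing.Theory Num.Theory.
Import numFieldNormedType.Exports.
Local Open Scope classical_set_scope.
Local Open Scope ring_scope.

Section Defs.
Variable R : realType.

Definition A0 (n : nat) : 'M[R]_n :=
  \matrix_(i < n, j < n) ((j : nat) == (i : nat).+1)%:R.

Definition e_last (n : nat) : 'cV[R]_n :=
  \col_(i < n) ((i : nat) == n.-1)%:R.

Definition drift n (f : 'cV[R]_n -> R) (x : 'cV[R]_n) : 'cV[R]_n :=
  A0 n *m x + f x *: e_last n.
Definition input n (g : 'cV[R]_n -> R) (x : 'cV[R]_n) : 'cV[R]_n :=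
  g x *: e_last n.

Definition C1 n (f : 'cV[R]_n -> R) : Prop :=
  (forall x, differentiable f x) /\ (forall v : 'cV[R]_n, continuous ('D_v f)).

Definition bernstein (T : R) (p i : nat) (tau : R) : R :=
  'C(p, i)%:R * (tau / T) ^+ i * (1 - tau / T) ^+ (p - i).
Definition bezier (T : R) (p : nat) (xi : nat -> R) (tau : R) : R :=
  \sum_(i < p.+1) xi i * bernstein T p i tau.

Definition partition (a b : R) (m : nat) (s : nat -> R) : Prop :=
  s 0%N = a /\ s m = b /\ (forall i, (i < m)%N -> s i < s i.+1).

Definition piecewise_continuous (a b : R) (u : R -> R) : Prop :=
  exists (m : nat) (s : nat -> R), partition a b m s /\
    forall i, (i < m)%N ->
      {in `]s i, s i.+1[, continuous u} /\
      (exists l : R, u x @[x --> (s i)^'+] --> l) /\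
      (exists l : R, u x @[x --> (s i.+1)^'-] --> l).

Definition piecewise_C1 n (a b : R) (x : R -> 'cV[R]_n) : Prop :=
  {within `[a, b], continuous x} /\
  exists (m : nat) (s : nat -> R), partition a b m s /\
    forall i, (i < m)%N ->
      (forall t, t \in `]s i, s i.+1[ -> derivable x t 1) /\
      {in `]s i, s i.+1[, continuous (derive1 x)} /\
      (exists l : 'cV[R]_n, derive1 x t @[t --> (s i)^'+] --> l) /\
      (exists l : 'cV[R]_n, derive1 x t @[t --> (s i.+1)^'-] --> l).

Definition dyn_admissible n (F G : 'cV[R]_n -> 'cV[R]_n) (a b : R)
    (x : R -> 'cV[R]_n) : Prop :=
  piecewise_C1 a b x /\
  exists u : R -> R, piecewise_continuous a b u /\
    {ae (@lebesgue_measure R), forall t, t \in `[a, b] ->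
        derivable x t 1 /\ derive1 x t = F (x t) + u t *: G (x t)}.

End Defs.

(* Main.v *)
Require Import Defs.
From HB Require Import structures.
From mathcomp Require Import all_boot all_order all_algebra.
From mathcomp Require Import all_classical all_reals all_analysis.
Import Order.TTheory GRing.Theory Num.Theory.
Import numFieldNormedType.Exports.
Local Open Scope classical_set_scope.
Local Open Scope ring_scope.

From mathcomp Require Import ring lra.
Section Helpers.
Variable R : realType.

Definition bzp (T : R) p (c : nat -> R) : {poly R} :=
  \sum_(i < p.+1) (c i * 'C(p, i)%:R) *: ((T^-1 *: 'X) ^+ i * (1 - T^-1 *: 'X) ^+ (p - i)).

Lemma bezier_horner (T : R) p c : bezier T p c = horner (bzp T p c).
Proof.
apply/funext => tau; rewrite /bezier /bzp horner_sum; apply: eq_bigr => i _.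
rewrite hornerZ hornerM !horner_exp hornerD hornerN !hornerZ hornerX hornerC.
by rewrite /bernstein !mulrA [_ * T^-1]mulrC.
Qed.

Lemma derive1n_horner (P : {poly R}) j : derive1n j (horner P) = horner (P^`(j)).
Proof.
elim: j => [|j ih]; first by apply/funext => x; rewrite derivn0.
by rewrite derive1nS ih -derivE derivnS.
Qed.

Definition Qf n (G : nat -> {poly R}) (t : R) : 'cV[R]_n := \col_(j < n) (G j).[t].

Lemma Qf_derivable n G t : derivable (@Qf n G) t 1.
Proof.
apply/derivable_mxP => i j.
have -> : (fun x => @Qf n G x i j) = horner (G i) by apply/funext => x; rewrite mxE.
exact: derivable_horner.
Qed.

Lemma Qf_derive n G t : derive1 (@Qf n G) t = Qf n (fun j => (G j)^`()) t.
Proof.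
rewrite derive1E derive_mx; last exact: Qf_derivable.
apply/matrixP => i j; rewrite !mxE.
have -> : (fun x => @Qf n G x i j) = horner (G i) by apply/funext => x; rewrite mxE.
by rewrite -derive1E -derivE.
Qed.

Lemma Qf_cont n G : continuous (@Qf n G).
Proof.
move=> t; apply/differentiable_continuous.
exact/derivable1_diffP/Qf_derivable.
Qed.

Lemma Qf_derive_cont n G : continuous (derive1 (@Qf n G)).
Proof.
have -> : derive1 (@Qf n G) = Qf n (fun j => (G j)^`()) by apply/funext => t; exact: Qf_derive.
exact: Qf_cont.
Qed.


Lemma eqn_lemma n' (f g : 'cV[R]_n'.+1 -> R) (X D : 'cV[R]_n'.+1) :
  g X != 0 -> (forall i : 'I_n'.+1, (i < n')%N -> D i ord0 = X (inord i.+1) ord0) ->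
  D = drift f X + ((D ord_max ord0 - f X) / g X) *: input g X.
Proof.
move=> gX hD; apply/matrixP => i j; rewrite ord1 /drift /input !mxE /A0 /e_last.
under eq_bigr do rewrite mxE.
have [iL|iM] := ltnP i n'.
  rewrite (bigD1 (inord i.+1)) //= big1; last first.
    move=> l hl; case: eqP => hl' //; last by rewrite mul0r.
    by move: hl; rewrite (_ : l = inord i.+1) ?eqxx //; apply/val_inj; rewrite /= inordK.
  rewrite inordK ?ltnS // eqxx mul1r addr0 (hD i iL) ltn_eqF //.
  by rewrite !mulr0 !addr0.
have -> : i = ord_max by apply/val_inj/eqP; rewrite eqn_leq iM -ltnS ltn_ord.
rewrite big1; last by move=> l _; rewrite ltn_eqF ?mul0r // ltn_ord.
rewrite /= eqxx !mulr1 add0r.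
by rewrite divfK // addrC subrK.
Qed.

End Helpers.
Arguments bzp {R}. Arguments Qf {R}.

Section Generic.
Variable R : realType.
Variable n N : nat.
Variable s : nat -> R.
Hypothesis s_incr : forall i, s i < s i.+1.
Variable Q : nat -> R -> 'cV[R]_n.
Hypothesis hQd : forall k t, derivable (Q k) t 1.
Hypothesis hQc : forall k, continuous (Q k).
Hypothesis hQdc : forall k, continuous (derive1 (Q k)).
Variable xd : R -> 'cV[R]_n.
Hypothesis agree : forall k, (k < N)%N -> forall t, s k <= t <= s k.+1 -> xd t = Q k t.

Lemma s_lt i j : (i < j)%N -> s i < s j.
Proof.
elim: j => // j ih; rewrite ltnS leq_eqVlt => /predU1P[->//|/ih h].
exact: lt_trans h (s_incr j).
Qed.

Lemma find_piece t : s 0 <= t -> t < s N -> exists k, (k < N)%N /\ s k <= t < s k.+1.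
Proof.
move=> h0; elim: N => [|M ih] hM; first by move: (le_lt_trans h0 hM); rewrite ltxx.
have [tM|Mt] := ltP t (s M).
  by have [k [kM hk]] := ih tM; exists k; split => //; exact: ltnW.
by exists M; split => //; rewrite Mt hM.
Qed.

Lemma agree_near k t : (k < N)%N -> t \in `]s k, s k.+1[ ->
  \forall y \near t, Q k y = xd y.
Proof.
move=> kN ht; apply: filterS (near_in_itvoo ht) => y.
rewrite in_itv /= => /andP[h1 h2]; rewrite (@agree k kN) // !ltW //.
Qed.

Lemma D_eq k t : (k < N)%N -> t \in `]s k, s k.+1[ ->
  derivable xd t 1 /\ derive1 xd t = derive1 (Q k) t.
Proof.
move=> kN ht; split; first exact: (@near_eq_derivable _ _ _ (Q k) xd t 1 (@agree_near k t kN ht) (hQd k t)).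
rewrite !derive1E; apply: near_eq_derive.
by apply: filterS (@agree_near k t kN ht) => y ->.
Qed.

Lemma right_lim k t : (k < N)%N -> s k <= t < s k.+1 -> xd @ t^'+ --> xd t.
Proof.
move=> kN /andP[t1 t2]; rewrite (@agree k kN); last by rewrite t1 ltW.
apply: cvg_trans (cvg_at_right_filter (hQc k t)).
apply: near_eq_cvg; near=> y.
rewrite (@agree k kN) //; apply/andP; split.
  apply: (le_trans t1); apply: ltW; near: y; exact: nbhs_right_gt.
apply/ltW; near: y; exact: nbhs_right_lt.
Unshelve. all: by end_near. Qed.

Lemma left_lim k t : (k < N)%N -> s k < t <= s k.+1 -> xd @ t^'- --> xd t.
Proof.
move=> kN /andP[t1 t2]; rewrite (@agree k kN); last by rewrite t2 ltW.
apply: cvg_trans (cvg_at_left_filter (hQc k t)).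
apply: near_eq_cvg; near=> y.
rewrite (@agree k kN) //; apply/andP; split.
  apply: ltW; near: y; exact: nbhs_left_gt.
apply: (le_trans _ t2); apply: ltW; near: y; exact: nbhs_left_lt.
Unshelve. all: by end_near. Qed.

Lemma xd_cont : {within `[s 0, s N], continuous xd}.
Proof.
have [N0|Npos] := posnP N.
  rewrite N0; apply/subspace_continuousP => x.
  rewrite /= in_itv /= => /andP[hx1 hx2].
  apply/cvgrPdist_le => e e0; rewrite near_withinE; apply: nearW => y /=.
  rewrite in_itv /= => /andP[h1 h2].
  have -> : y = s 0 by apply/eqP; rewrite eq_le h1 h2.
  have -> : x = s 0 by apply/eqP; rewrite eq_le hx1 hx2.
  by rewrite subrr normr0 ltW.
have H := (@continuous_within_itvP R R _ (s 0) (s N) xd (@s_lt 0 N Npos)). apply H.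
split.
- move=> t; rewrite in_itv /= => /andP[t1 t2].
  have [k [kN /andP[k1 k2]]] := @find_piece t (ltW t1) t2.
  apply/left_right_continuousP; split; last by apply: (@right_lim k) => //; rewrite k1.
  have [kt|tk] := ltP (s k) t.
    by apply: (@left_lim k) => //; rewrite kt ltW.
  have tk' : t = s k by apply/eqP; rewrite eq_le tk k1.
  case: k kN k1 k2 tk tk' => [|k] kN k1 k2 tk tk'.
    by move: t1; rewrite tk' ltxx.
  apply: (@left_lim k); first exact: ltnW.
  by rewrite tk' s_incr lexx.
- by apply: (@right_lim 0) => //; rewrite lexx s_incr.
- have [M NM] : exists M, N = M.+1 by exists N.-1; rewrite prednK.
  rewrite NM; apply: (@left_lim M); first by rewrite NM.
  by rewrite s_incr lexx.
Qed.

Lemma pc1 : piecewise_C1 (s 0) (s N) xd.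
Proof.
split; first exact: xd_cont.
exists N, s; split; first by split.
move=> i iN; split; [|split; [|split]].
- by move=> t ht; case: (@D_eq i t iN ht).
- move=> t ht; rewrite /continuous_at (@D_eq i t iN ht).2.
  apply: cvg_trans (hQdc i t).
  apply: near_eq_cvg; apply: filterS (near_in_itvoo ht) => y hy.
  by rewrite (@D_eq i y iN hy).2.
- exists (derive1 (Q i) (s i)).
  apply: cvg_trans (cvg_at_right_filter (hQdc i (s i))).
  apply: near_eq_cvg; near=> y.
  rewrite (@D_eq i y iN _).2 // in_itv /=; apply/andP; split.
    near: y; exact: nbhs_right_gt.
  near: y; exact: nbhs_right_lt.
- exists (derive1 (Q i) (s i.+1)).
  apply: cvg_trans (cvg_at_left_filter (hQdc i (s i.+1))).
  apply: near_eq_cvg; near=> y.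
  rewrite (@D_eq i y iN _).2 // in_itv /=; apply/andP; split.
    near: y; exact: nbhs_left_gt.
  near: y; exact: nbhs_left_lt.
Unshelve. all: by end_near. Qed.

Lemma gen_pc (U : nat -> R -> R) (u : R -> R) :
  (forall k, continuous (U k)) ->
  (forall k t, (k < N)%N -> t \in `]s k, s k.+1[ -> u t = U k t) ->
  piecewise_continuous (s 0) (s N) u.
Proof.
move=> hU hu.
exists N, s; split; first by split.
move=> i iN; split; [|split].
- move=> t ht; rewrite /continuous_at (hu i t iN ht).
  apply: cvg_trans (hU i t).
  apply: near_eq_cvg; apply: filterS (near_in_itvoo ht) => y hy.
  by rewrite (hu i y iN hy).
- exists (U i (s i)).
  apply: cvg_trans (cvg_at_right_filter (hU i (s i))).
  apply: near_eq_cvg; near=> y.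
  rewrite (hu i y iN _) // in_itv /=; apply/andP; split.
    near: y; exact: nbhs_right_gt.
  near: y; exact: nbhs_right_lt.
- exists (U i (s i.+1)).
  apply: cvg_trans (cvg_at_left_filter (hU i (s i.+1))).
  apply: near_eq_cvg; near=> y.
  rewrite (hu i y iN _) // in_itv /=; apply/andP; split.
    near: y; exact: nbhs_left_gt.
  near: y; exact: nbhs_left_lt.
Unshelve. all: by end_near. Qed.

Lemma gen_ae (P : R -> Prop) :
  (forall k t, (k < N)%N -> t \in `]s k, s k.+1[ -> P t) ->
  {ae (@lebesgue_measure R), forall t, t \in `[s 0, s N] -> P t}.
Proof.
move=> hP.
have cs : countable (range s).
  exact: sub_countable (card_image_le s setT) (countableP setT).
exists (range s); split.
- apply: countable_measurable => //; exact: measurable_set1.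
- exact: countable_lebesgue_measure0.
move=> t /=; apply: contra_notP => nr tab.
move: tab; rewrite in_itv /= => /andP[t1 t2].
have tN : t < s N.
  rewrite lt_neqAle t2 andbT; apply/eqP => tsN; apply: nr; by exists N.
have [k [kN /andP[k1 k2]]] := @find_piece t t1 tN.
apply: (hP k t kN); rewrite in_itv /= k2 andbT lt_neqAle k1 andbT.
by apply/eqP => skt; apply: nr; exists k.
Qed.

End Generic.

Theorem lemma2 (R : realType) (n : nat) (hn : (0 < n)%N)
  (f g : 'cV[R]_n -> R) (hf : C1 f) (hg : C1 g) (hf0 : f 0 = 0)
  (hgnz : forall x, g x != 0)
  (N : nat) (T tlo : R) (hT : 0 < T) (htlo : 0 <= tlo)
  (x : nat -> 'cV[R]_n)
  (xi : nat -> nat -> R)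
  (hxi : forall k, (k < N)%N -> forall j : 'I_n,
     derive1n j (bezier T (2 * n).-1 (xi k)) 0 = x k j ord0 /\
     derive1n j (bezier T (2 * n).-1 (xi k)) T = x k.+1 j ord0)
  (xd : R -> 'cV[R]_n)
  (hxd : forall k, (k < N)%N -> forall t,
     tlo + k%:R * T <= t < tlo + k.+1%:R * T ->
     xd t = \col_(j < n) derive1n j (bezier T (2 * n).-1 (xi k))
                                    (t - (tlo + k%:R * T)))
  (hxdN : xd (tlo + N%:R * T) = x N) :
  dyn_admissible (drift f) (input g) tlo (tlo + N%:R * T) xd.
Proof.
destruct n as [|n']; first by [].
pose s := fun k : nat => tlo + k%:R * T.
have s_incr : forall i, s i < s i.+1.
  by move=> i; rewrite /s ltrD2l ltr_pM2r // ltr_nat.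
pose G := fun k (j : nat) => (bzp T (2 * n'.+1).-1 (xi k))^`(j) \Po ('X - (s k)%:P).
pose Q := fun k => Qf n'.+1 (G k).
have hGd : forall k j, (G k j)^`() = G k j.+1.
  by move=> k j; rewrite /G deriv_comp derivnS derivB derivX derivC subr0 mulr1.
have hQval : forall k t, Q k t = \col_(j < n'.+1)
    derive1n j (bezier T (2 * n'.+1).-1 (xi k)) (t - s k).
  move=> k t; apply/matrixP => i j.
  by rewrite !mxE /G horner_comp hornerXsubC bezier_horner derive1n_horner.
have agree : forall k, (k < N)%N -> forall t, s k <= t <= s k.+1 -> xd t = Q k t.
  move=> k kN t /andP[t1 t2].
  have [t3|t3] := ltP t (s k.+1).
    by rewrite hQval; apply: hxd => //; rewrite t1 t3.
  have te : t = s k.+1 by apply/eqP; rewrite eq_le t2 t3.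
  have xk1 : Q k t = x k.+1.
    apply/matrixP => i j; rewrite hQval mxE ord1 te.
    have -> : s k.+1 - s k = T by rewrite /s mulrSr; ring.
    by rewrite (proj2 (hxi k kN i)).
  rewrite xk1.
  have [k1N|k1N] := ltnP k.+1 N.
    rewrite (hxd k.+1 k1N t); last by rewrite te lexx s_incr.
    apply/matrixP => i j; rewrite mxE ord1 te subrr.
    exact: (proj1 (hxi k.+1 k1N i)).
  have NE : N = k.+1 by apply/eqP; rewrite eqn_leq kN k1N.
  by rewrite te; move: hxdN; rewrite NE.
have hQd : forall k t, derivable (Q k) t 1 by move=> k t; exact: Qf_derivable.
have hQc : forall k, continuous (Q k) by move=> k; exact: Qf_cont.
have hQdc : forall k, continuous (derive1 (Q k)) by move=> k; exact: Qf_derive_cont.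
have fc : continuous f by move=> y; apply: differentiable_continuous; exact: hf.1.
have gc : continuous g by move=> y; apply: differentiable_continuous; exact: hg.1.
pose u := fun t => ((derive1 xd t) ord_max ord0 - f (xd t)) / g (xd t).
pose U := fun k t => ((derive1 (Q k) t) ord_max ord0 - f (Q k t)) / g (Q k t).
have hu : forall k t, (k < N)%N -> t \in `]s k, s k.+1[ -> u t = U k t.
  move=> k t kN ht; rewrite /u /U (@D_eq R _ N s Q hQd xd agree k t kN ht).2.
  rewrite (agree k kN t) //; move: ht; rewrite in_itv /= => /andP[h1 h2].
  by rewrite !ltW.
have hU : forall k, continuous (U k).
  move=> k t; rewrite /U.
  have hD : (fun t => derive1 (Q k) t ord_max ord0) = horner ((G k n')^`()).
    by apply/funext => y; rewrite Qf_derive mxE.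
  apply: cvgM; first apply: cvgB.
  - have H := @continuous_horner R ((G k n')^`()) t; rewrite -hD in H; exact: H.
  - exact: continuous_comp (hQc k t) (fc (Q k t)).
  - apply: cvgV => //; exact: continuous_comp (hQc k t) (gc (Q k t)).
have e0 : tlo = s 0 by rewrite /s mul0r addr0.
rewrite {1}e0.
split; first exact: (@pc1 R _ N s s_incr Q hQd hQc hQdc xd agree).
exists u; split; first exact: (@gen_pc R N s s_incr U u hU hu).
apply: (@gen_ae R N s) => k t kN ht.
have [dxd Dxd] := @D_eq R _ N s Q hQd xd agree k t kN ht.
split => //.
have tk : xd t = Q k t.
  by rewrite (agree k kN t) //; move: ht; rewrite in_itv /= => /andP[h1 h2]; rewrite !ltW.
rewrite /u Dxd tk; apply: eqn_lemma => // i ilt.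
by rewrite /Q Qf_derive !mxE hGd inordK.
Qed.
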